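(* Let $N<M$ be natural numbers. Suppose $\emptyset\neq A_1\subseteq{}^N2$, $\emptyset\neq A_2\subseteq{}^{[N,M)}2$ and $A\subseteq{}^M2$ satisfy $\|A_1\|_4^N>1$, $\|A_2\|_4^{[N,M)}>1$ and $A=\{f\cup g: f\in A_1,\ g\in A_2\}$. Then \[\|A\|_4^M\geq\min\{\|A_1\|_4^N,\|A_2\|_4^{[N,M)}\}.\]
   Context: $N=\{0,\ldots,N-1\}$, $M=\{0,\ldots,M-1\}$, $[N,M)=\{N,\ldots,M-1\}$. For a finite index set $I$, ${}^I2$ is the set of all functions $I\to\{0,1\}$ and ${}^{\underline I}2$ the set of partial functions $\sigma$ with $\mathrm{dom}(\sigma)\subseteq I$ and values in $\{0,1\}$ (empty function included); for $\sigma\in{}^{\underline I}2$, $[\sigma]=\{f\in{}^I2:\sigma\subseteq f\}$. For $A\subseteq{}^I2$, $\Delta_I(A)=\{\sigma\in{}^{\underline I}2:[\sigma]\cap A=\emptyset\text{ and }[\rho]\cap A\neq\emptyset\text{ for all }\rho\subsetneq\sigma\}$. For $\delta_1,\delta_2\subseteq{}^{\underline I}2$, $\delta_1\preceq\delta_2$ means every $\sigma\in\delta_1$ has some $\rho\in\delta_2$ with $\rho\subseteq\sigma$. For $\delta\subseteq{}^{\underline I}2$, $\mathrm{hn}(\delta)$ is the maximum of $k+1$ over those natural numbers $k<|I|$ such that for every $\delta'\subseteq\delta$ there is $\delta''\subseteq\delta'$ whose elements have pairwise disjoint domains and $|\bigcup_{\sigma\in\delta''}\mathrm{dom}(\sigma)|\geq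 k|\delta'|$; $\mathrm{HN}(\delta)=\max\{\mathrm{hn}(\delta'):\delta'\subseteq{}^{\underline I}2,\ \delta\preceq\delta'\}$; and $\|A\|_4^I=\mathrm{HN}(\Delta_I(A))$ for $A\subseteq{}^I2$. *)

(* Defs.v *)
From mathcomp Require Import all_boot all_order.
Set Implicit Arguments. Unset Strict Implicit. Unset Printing Implicit Defensive.

(* All index sets are subsets I of an ambient finite type T (in the theorem,
   T = 'I_M).  A partial 0/1 function with domain contained in T is an
   element of {ffun T -> option bool}; its domain is where it is not None.
   A (total) function I -> {0,1} is a partial function with domain exactly I. *)

Definition pfun (T : finType) := {ffun T -> option bool}.

Section Defs.
Variable T : finType.

Definition dom (s : pfun T) : {set T} := [set x | s x != None].

Definition psub (s f : pfun T) : bool :=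
  [forall x, (s x != None) ==> (f x == s x)].

Definition totfuns (I : {set T}) : {set pfun T} := [set f | dom f == I].

Definition cyl (I : {set T}) (s : pfun T) : {set pfun T} :=
  [set f in totfuns I | psub s f].

Definition Delta (I : {set T}) (A : {set pfun T}) : {set pfun T} :=
  [set s | [&& dom s \subset I, [disjoint cyl I s & A] &
             [forall r, (psub r s && (r != s)) ==> ~~ [disjoint cyl I r & A]]]].

Definition preceq (d1 d2 : {set pfun T}) : bool :=
  [forall s in d1, exists r in d2, psub r s].

Definition pairwise_disj_dom (d : {set pfun T}) : bool :=
  [forall s in d, forall t in d, (s != t) ==> [disjoint dom s & dom t]].

Definition hn_cond (d : {set pfun T}) (k : nat) : bool :=
  [forall d1 : {set pfun T}, (d1 \subset d) ==>
     [exists d2 : {set pfun T}, [&& d2 \subset d1, pairwise_disj_dom d2 &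
        k * #|d1| <= #|\bigcup_(s in d2) dom s| ]]].

Definition hn (I : {set T}) (d : {set pfun T}) : nat :=
  \max_(k < #|I| | hn_cond d k) k.+1.

Definition HN (I : {set T}) (d : {set pfun T}) : nat :=
  \max_(d' : {set pfun T} | [forall s in d', dom s \subset I] && preceq d d')
     hn I d'.

Definition norm4 (I : {set T}) (A : {set pfun T}) : nat := HN I (Delta I A).

(* f ∪ g (for functions with disjoint domains) *)
Definition punion (f g : pfun T) : pfun T :=
  [ffun x => if f x is Some b then Some b else g x].

End Defs.

(* Main.v *)
Require Import Defs.
From mathcomp Require Import all_boot all_order.
Set Implicit Arguments. Unset Strict Implicit. Unset Printing Implicit Defensive.

Lemma bigmax_witness (I : finType) (P : pred I) (F : I -> nat) :
  0 < \max_(i | P i) F i -> exists2 i, P i & \max_(i | P i) F i = F i.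
Proof.
case: (pickP P) => [i0 Pi0 _ | P0].
  exists [arg max_(i > i0 | P i) F i]; first by case: arg_maxnP.
  exact: bigmax_eq_arg.
by rewrite big_pred0.
Qed.

Section L.
Variable T : finType.
Implicit Types (a b c s r : pfun T) (I : {set T}).

Lemma psub_trans a b c : psub a b -> psub b c -> psub a c.
Proof.
move=> /forallP ab /forallP bc; apply/forallP => x; apply/implyP => ax.
have /eqP bx := implyP (ab x) ax.
by have := implyP (bc x); rewrite bx => /(_ ax).
Qed.

Lemma psub_dom a b : psub a b -> dom a \subset dom b.
Proof.
move=> /forallP ab; apply/subsetP => x; rewrite !inE => ax.
by have /eqP -> := implyP (ab x) ax.
Qed.

Lemma psub_lt a b : psub a b -> a != b -> #|dom a| < #|dom b|.
Proof.
move=> ab neq; rewrite ltn_neqAle subset_leq_card ?psub_dom // andbT.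
apply: contra neq => /eqP ecard.
have ed : dom a = dom b by apply/eqP; rewrite eqEcard psub_dom // ecard leqnn.
apply/eqP/ffunP => x; case: (boolP (a x != None)) => ax.
  by move/forallP: ab => /(_ x) /implyP /(_ ax) /eqP.
move: ax; rewrite negbK => /eqP ax.
have : x \notin dom b by rewrite -ed inE ax.
by rewrite inE negbK => /eqP ->.
Qed.

Lemma delta_extract I (B : {set pfun T}) n : forall s, #|dom s| <= n -> dom s \subset I ->
  [disjoint cyl I s & B] -> exists2 t, t \in Delta I B & psub t s.
Proof.
elim: n => [|n IH] s hs sI dj;
  (case: (boolP (s \in Delta I B)) => sD;
   [by exists s => //; apply/forallP => x; apply/implyP => _|]);
  move: sD; rewrite inE sI dj /= => /forallPn [r];
  rewrite negb_imply => /andP [/andP [rs nrs] /negPn djr];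
  have lt := psub_lt rs nrs.
  by move: (leq_trans lt hs).
have [t tD tr] := IH r (leq_trans lt hs) (subset_trans (psub_dom rs) sI) djr.
by exists t => //; apply: psub_trans tr rs.
Qed.

Lemma hn_cond_mono (d : {set pfun T}) k j : j <= k -> hn_cond d k -> hn_cond d j.
Proof.
move=> jk /forallP H; apply/forallP => d1; apply/implyP => s1.
have /existsP [d2 /and3P [a b c]] := implyP (H d1) s1.
apply/existsP; exists d2; rewrite a b /=.
exact: leq_trans (leq_mul jk (leqnn _)) c.
Qed.

Lemma bigcup_dom_sub (f : {set pfun T}) I : (forall s, s \in f -> dom s \subset I) ->
  \bigcup_(s in f) dom s \subset I.
Proof. by move=> H; apply/bigcupsP => s /H. Qed.

Lemma hn_cond_union I1 I2 (e1 e2 : {set pfun T}) k : [disjoint I1 & I2] ->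
  (forall s, s \in e1 -> dom s \subset I1) -> (forall s, s \in e2 -> dom s \subset I2) ->
  hn_cond e1 k -> hn_cond e2 k -> hn_cond (e1 :|: e2) k.
Proof.
move=> dI H1 H2 /forallP C1 /forallP C2; apply/forallP => d1; apply/implyP => sd1.
have /existsP [f1 /and3P [f1s f1p f1c]] := implyP (C1 (d1 :&: e1)) (subsetIr _ _).
have sub2 : d1 :\: e1 \subset e2.
  apply/subsetP => x; rewrite inE => /andP [xn xd].
  by have := subsetP sd1 x xd; rewrite inE (negbTE xn).
have /existsP [f2 /and3P [f2s f2p f2c]] := implyP (C2 (d1 :\: e1)) sub2.
have F1 : forall s, s \in f1 -> dom s \subset I1.
  by move=> s /(subsetP f1s); rewrite inE => /andP [_ /H1].
have F2 : forall s, s \in f2 -> dom s \subset I2.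
  by move=> s /(subsetP f2s) /(subsetP sub2) /H2.
have cross : forall s t, s \in f1 -> t \in f2 -> [disjoint dom s & dom t].
  move=> s t sf tf; apply: disjointWl (F1 _ sf) _; apply: disjointWr (F2 _ tf) _; exact: dI.
apply/existsP; exists (f1 :|: f2); apply/and3P; split.
- rewrite subUset; apply/andP; split.
    by apply: subset_trans f1s (subsetIl _ _).
  by apply: subset_trans f2s (subsetDl _ _).
- apply/forallP => s; apply/implyP => sU; apply/forallP => t; apply/implyP => tU.
  apply/implyP => nst.
  move: sU tU; rewrite !inE => /orP [sf|sf] /orP [tf|tf].
  + by move/forallP: f1p => /(_ s) /implyP /(_ sf) /forallP /(_ t) /implyP /(_ tf) /implyP /(_ nst).
  + exact: cross.
  + by rewrite disjoint_sym; apply: cross.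
  + by move/forallP: f2p => /(_ s) /implyP /(_ sf) /forallP /(_ t) /implyP /(_ tf) /implyP /(_ nst).
- rewrite bigcup_setU -(cardsID e1 d1) mulnDr.
  have dj : [disjoint \bigcup_(s in f1) dom s & \bigcup_(s in f2) dom s].
    apply: disjointWl (bigcup_dom_sub F1) _; apply: disjointWr (bigcup_dom_sub F2) _; exact: dI.
  rewrite cardsU (disjoint_setI0 dj) cards0 subn0.
  exact: leq_add.
Qed.
End L.

Definition restr (T : finType) (s : pfun T) (I : {set T}) : pfun T :=
  [ffun x => if x \in I then s x else None].

Lemma restr_dom (T : finType) (s : pfun T) I : dom (restr s I) \subset I.
Proof. by apply/subsetP => x; rewrite !inE ffunE; case: (x \in I); rewrite ?eqxx. Qed.

Lemma restr_psub (T : finType) (s : pfun T) I : psub (restr s I) s.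
Proof.
apply/forallP => x; apply/implyP; rewrite ffunE; case: (x \in I) => //; by rewrite eqxx.
Qed.

Lemma HN_witness (T : finType) I (d : {set pfun T}) : 0 < HN I d ->
  exists d' : {set pfun T}, [/\ [forall s in d', dom s \subset I], preceq d d', hn_cond d' (HN I d).-1
     & (HN I d).-1 < #|I|].
Proof.
move=> /[dup] hpos; rewrite {1}/HN => /bigmax_witness [d' /andP [P1 P2] E].
have E2 : HN I d = hn I d' by [rewrite /HN E]. rewrite E2 in hpos *; exists d'; split => //.
  move: hpos; rewrite /hn => /bigmax_witness [k ck ->] //.
move: hpos; rewrite /hn => /bigmax_witness [k ck ->] /=; exact: ltn_ord.
Qed.

Theorem proposition6p28 (N M : nat) (hNM : N < M)
  (A1 A2 A : {set pfun (ordinal M)}) :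
  A1 != set0 ->
  A1 \subset totfuns [set i : 'I_M | i < N] ->
  A2 != set0 ->
  A2 \subset totfuns [set i : 'I_M | N <= i] ->
  A \subset totfuns [set: 'I_M] ->
  1 < norm4 [set i : 'I_M | i < N] A1 ->
  1 < norm4 [set i : 'I_M | N <= i] A2 ->
  A = [set punion f g | f in A1, g in A2] ->
  minn (norm4 [set i : 'I_M | i < N] A1) (norm4 [set i : 'I_M | N <= i] A2)
    <= norm4 [set: 'I_M] A.
Proof.
move=> _ sA1 _ sA2 _ _ _ eA.
set I1 := [set i : 'I_M | i < N]; set I2 := [set i : 'I_M | N <= i].
rewrite /norm4.
set h1 := HN I1 _; set h2 := HN I2 _.
case: (posnP (minn h1 h2)) => [->//|mpos].
move: (mpos); rewrite leq_min => /andP [p1 p2].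
have [d1 [D1 P1 C1 L1]] := HN_witness p1.
have [d2 [D2 P2 C2 L2]] := HN_witness p2.
set k := (minn h1 h2).-1.
have k1 : k <= h1.-1 by rewrite /k -!subn1 leq_sub2r // geq_minl.
have k2 : k <= h2.-1 by rewrite /k -!subn1 leq_sub2r // geq_minr.
have dI : [disjoint I1 & I2].
  by rewrite -setI_eq0; apply/eqP/setP => x; rewrite !inE leqNgt andNb.
have H1 : forall s, s \in d1 -> dom s \subset I1.
  by move=> s sd; move/forallP: D1 => /(_ s) /implyP /(_ sd).
have H2 : forall s, s \in d2 -> dom s \subset I2.
  by move=> s sd; move/forallP: D2 => /(_ s) /implyP /(_ sd).
have CU : hn_cond (d1 :|: d2) k.
  by apply: (hn_cond_union dI H1 H2); [apply: hn_cond_mono k1 C1 | apply: hn_cond_mono k2 C2].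
have kM : k < #|[set: 'I_M]|.
  rewrite cardsT card_ord; apply: leq_trans (leq_ltn_trans k1 L1) _.
  by apply: leq_trans (max_card _) _; rewrite card_ord.
rewrite -(prednK mpos) -/k.
apply: leq_trans (_ : hn [set: 'I_M] (d1 :|: d2) <= _).
  exact: (@leq_bigmax_cond _ _ (fun i : 'I_#|[set: 'I_M]| => i.+1) (Ordinal kM) CU).
apply: leq_bigmax_cond; apply/andP; split.
  by apply/forallP => s; apply/implyP => _; apply: subsetT.
apply/forallP => s; apply/implyP; rewrite inE => /and3P [_ djs _].
have key : [disjoint cyl I1 (restr s I1) & A1] || [disjoint cyl I2 (restr s I2) & A2].
  apply/negPn/negP; rewrite negb_or -!setI_eq0 => /andP [/set0Pn [f1] /setIP [c1 a1] /set0Pn [f2] /setIP [c2 a2]].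
  move: djs; rewrite -setI_eq0 => /eqP/setP/(_ (punion f1 f2)); rewrite !inE => /negbT; apply/negP.
  have t1 := subsetP sA1 _ a1; have t2 := subsetP sA2 _ a2.
  move: t1 t2 c1 c2; rewrite !inE => /eqP e1 /eqP e2 /andP [_ q1] /andP [_ q2].
  have d1x x : (f1 x != None) = (x < N) by move/setP: e1 => /(_ x); rewrite !inE.
  have d2x x : (f2 x != None) = (N <= x) by move/setP: e2 => /(_ x); rewrite !inE.
  rewrite eA imset2_f // andbT.
rewrite negbK; apply/andP; split.
    apply/eqP/setP => x; rewrite !inE ffunE.
    case e: (f1 x) => [b|] //; move: (d1x x) (d2x x); rewrite e eqxx /= => h1x ->.
    by rewrite leqNgt -h1x.
  apply/forallP => x; apply/implyP => sx; rewrite ffunE.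
  case: (ltnP x N) => xN.
    move/forallP: q1 => /(_ x); rewrite ffunE inE xN => /implyP /(_ sx) /eqP fx.
    by rewrite fx; case: (s x) sx.
  have -> : f1 x = None by apply/eqP; move: (d1x x); rewrite ltnNge xN => /negbT; rewrite negbK.
  by move/forallP: q2 => /(_ x); rewrite ffunE inE xN => /implyP /(_ sx).
case/orP: key => dj.
  have [t tD ts] := delta_extract (leqnn _) (restr_dom s I1) dj.
  have /existsP [r /andP [rd rt]] := implyP (forallP P1 t) tD.
  apply/existsP; exists r; rewrite inE rd /=.
  exact: psub_trans rt (psub_trans ts (restr_psub _ _)).
have [t tD ts] := delta_extract (leqnn _) (restr_dom s I2) dj.
have /existsP [r /andP [rd rt]] := implyP (forallP P2 t) tD.
apply/existsP; exists r; rewrite inE rd orbT /=.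
exact: psub_trans rt (psub_trans ts (restr_psub _ _)).
Qed.
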